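(* Suppose that for every odd integer $n\ge 1$ and every integer $k\ge 0$ with $2^k<n<2^{k+1}$, there is an orientation of the $n$-cube in which every vertex has in-degree $n-2^k$ or $n$. Then for every positive integer $n$ and all integers $0\le a,b\le n$ for which there exist non-negative integers $s,t$ with $s+t=2^n$ and $as+bt=n2^{n-1}$, there is an orientation of the $n$-cube in which every vertex has in-degree $a$ or $b$.
   Context: The $n$-cube is the graph on binary $n$-tuples with edges between tuples differing in exactly one coordinate. An orientation assigns a direction to each edge; the in-degree of a vertex is the number of edges directed into it. *)

(* Defs.v *)
From mathcomp Require Import all_boot.
Set Implicit Arguments. Unset Strict Implicit. Unset Printing Implicit Defensive.

Definition cube (n : nat) : finType := {ffun 'I_n -> bool}.

Definition cube_adj (n : nat) (x y : cube n) : bool :=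
  #|[set i : 'I_n | x i != y i]| == 1.

(* An orientation of the n-cube is a relation o, where o x y means that the
   edge {x,y} is directed from x to y; every edge gets exactly one direction
   and only edges are directed. *)
Definition is_orientation (n : nat) (o : rel (cube n)) : Prop :=
  (forall x y : cube n, o x y -> cube_adj x y) /\
  (forall x y : cube n, cube_adj x y -> (o x y (+) o y x) = true).

Definition indeg (n : nat) (o : rel (cube n)) (v : cube n) : nat :=
  #|[set u : cube n | o u v]|.

(* Main.v *)
Require Import Defs.
From mathcomp Require Import all_boot.
From Stdlib Require Import Lia.
Set Implicit Arguments. Unset Strict Implicit. Unset Printing Implicit Defensive.

Definition flip n (z : cube n) (i : 'I_n) : cube n :=
  [ffun j => if j == i then ~~ z j else z j].

Lemma flipK n (z : cube n) i : flip (flip z i) i = z.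
Proof. apply/ffunP=> j; rewrite !ffunE; case: (j == i) => //=; exact: negbK. Qed.

Lemma flip_inj n (z : cube n) : injective (flip z).
Proof.
move=> i j /ffunP /(_ i); rewrite !ffunE eqxx.
case: eqP => [->//|_]; by case: (z i).
Qed.

Lemma adjP n (u v : cube n) : cube_adj u v <-> exists i, u = flip v i.
Proof.
split.
- move=> /cards1P [i Hi]; exists i; apply/ffunP=> j; rewrite ffunE.
  have := Hi; move/setP/(_ j); rewrite !inE.
  case: (j == i); case: (u j); case: (v j) => //=.
- move=> [i ->]; apply/cards1P; exists i; apply/setP=> j; rewrite !inE ffunE.
  case: (j == i); by case: (v j).
Qed.

Definition antisym n (D : cube n -> 'I_n -> bool) := forall z i, D (flip z i) i = ~~ D z i.
Definition dg n (D : cube n -> 'I_n -> bool) z := \sum_(i < n) (D z i : nat).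
Definition Good n a b := exists D : cube n -> 'I_n -> bool,
  antisym D /\ forall z, dg D z = a \/ dg D z = b.

Lemma dg_card n (D : cube n -> 'I_n -> bool) z : dg D z = #|[set i | D z i]|.
Proof.
rewrite /dg -sum1_card [in RHS]big_mkcond /=; apply: eq_bigr => i _; rewrite inE.
by case: (D z i).
Qed.

Definition orOf n (D : cube n -> 'I_n -> bool) : rel (cube n) :=
  fun u v => [exists i, (u == flip v i) && D v i].

Lemma orOfE n (D : cube n -> 'I_n -> bool) v i : orOf D (flip v i) v = D v i.
Proof.
apply/existsP/idP => [[j /andP [/eqP /flip_inj -> //]]|Hi].
by exists i; rewrite eqxx.
Qed.

Lemma Good_sound n a b : Good n a b ->
  exists o : rel (cube n), is_orientation o /\
      forall v : cube n, indeg o v = a \/ indeg o v = b.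
Proof.
move=> [D [HD Hdg]]; exists (orOf D); split; first split.
- by move=> x y /existsP [i /andP [/eqP -> _]]; apply/adjP; exists i.
- move=> x y /adjP [i ->]; rewrite orOfE.
  have -> : orOf D y (flip y i) = D (flip y i) i by rewrite -{1}(flipK y i) orOfE.
  rewrite HD; by case: (D y i).
- move=> v; have -> : indeg (orOf D) v = dg D v; last exact: Hdg.
  rewrite dg_card /indeg -(card_imset _ (@flip_inj n v)).
  apply: eq_card => u; rewrite inE; apply/idP/imsetP.
  + by move=> /existsP [i /andP [/eqP -> H]]; exists i; rewrite ?inE.
  + by move=> [i]; rewrite inE => H ->; rewrite orOfE.
Qed.

Lemma Good_complete n a b (o : rel (cube n)) : is_orientation o ->
  (forall v : cube n, indeg o v = a \/ indeg o v = b) -> Good n a b.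
Proof.
move=> [Ho1 Ho2] Hdeg; exists (fun v i => o (flip v i) v); split.
- move=> z i; rewrite flipK.
  have := Ho2 (flip z i) z; rewrite (_ : cube_adj _ _ = true); last by apply/adjP; exists i.
  move=> /(_ isT); by case: (o (flip z i) z); case: (o z (flip z i)).
- move=> z; rewrite dg_card; have <- : indeg o z = #|[set i | o (flip z i) z]|; last exact: Hdeg.
  rewrite /indeg -(card_imset _ (@flip_inj n z)).
  apply: eq_card => u; rewrite inE; apply/idP/imsetP.
  + move=> H; have [i Hi] := (adjP u z).1 (Ho1 _ _ H).
    by exists i; rewrite // inE -Hi.
  + by move=> [i]; rewrite inE => H ->.
Qed.

Lemma Good_sym n a b : Good n a b -> Good n b a.
Proof. by move=> [D [H1 H2]]; exists D; split=> // z; case: (H2 z); auto. Qed.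

Lemma Good_rev n a b : Good n a b -> Good n (n - b) (n - a).
Proof.
move=> [D [H1 H2]]; exists (fun z i => ~~ D z i); split.
- by move=> z i; rewrite H1.
- move=> z; have E : dg (fun z i => ~~ D z i) z + dg D z = n.
    rewrite /dg -big_split /= -[n in RHS]card_ord -sum1_card.
    by apply: eq_bigr => i _; case: (D z i).
  move: E; rewrite -plusE; case: (H2 z) => <-; [right|left]; rewrite -minusE; lia.
Qed.

Lemma Good_1 : Good 1 0 1.
Proof.
exists (fun (z : cube 1) (i : 'I_1) => z i); split.
- by move=> z i; rewrite ffunE eqxx.
- move=> z; rewrite /dg big_ord1; by case: (z ord0); auto.
Qed.

Lemma Good_2 : Good 2 1 1.
Proof.
pose x (z : cube 2) := z ord0 (+) z ord_max.
exists (fun z (i : 'I_2) => if i == ord0 then x z else ~~ x z); split.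
- move=> z i; rewrite /x !ffunE.
  case: i => [[|[|k]] Hk] //=; by case: (z ord0); case: (z ord_max).
- move=> z; rewrite /dg big_ord_recr big_ord1 /=; left.
  by case: (x z).
Qed.

Section Prod.
Variables p q : nat.
Definition lp (z : cube (p + q)) : cube p := [ffun j => z (lshift q j)].
Definition rq (z : cube (p + q)) : cube q := [ffun k => z (rshift p k)].

Lemma lp_flipL z j : lp (flip z (lshift q j)) = flip (lp z) j.
Proof.
apply/ffunP=> j'; rewrite !ffunE.
have -> : (lshift q j' == lshift q j) = (j' == j).
  by apply/eqP/eqP => [/(congr1 val) /= /val_inj|->].
by [].
Qed.
Lemma rq_flipL z j : rq (flip z (lshift q j)) = rq z.
Proof.
apply/ffunP=> k; rewrite !ffunE.
have -> : (rshift p k == lshift q j) = false.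
  apply/eqP => /(congr1 val) /= E; have := ltn_ord j; rewrite -E; by rewrite ltnNge leq_addr.
by [].
Qed.
Lemma lp_flipR z k : lp (flip z (rshift p k)) = lp z.
Proof.
apply/ffunP=> j; rewrite !ffunE.
have -> : (lshift q j == rshift p k) = false.
  apply/eqP => /(congr1 val) /= E; have := ltn_ord j; rewrite E; by rewrite ltnNge leq_addr.
by [].
Qed.
Lemma rq_flipR z k : rq (flip z (rshift p k)) = flip (rq z) k.
Proof.
apply/ffunP=> k'; rewrite !ffunE.
have -> : (rshift p k' == rshift p k) = (k' == k).
  by apply/eqP/eqP => [/(congr1 val) /= /addnI /val_inj|->].
by [].
Qed.
End Prod.

Lemma Good_prod p q a b e : Good p a b -> Good q e e -> Good (p + q) (a + e) (b + e).
Proof.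
move=> [D1 [H11 H12]] [D2 [H21 H22]].
exists (fun z i => match split i with inl j => D1 (lp z) j | inr k => D2 (rq z) k end).
split.
- move=> z i; case: (splitP i) => [j Hj|k Hk].
  + have -> : i = lshift q j by apply: val_inj.
    by rewrite lp_flipL.
  + have -> : i = rshift p k by apply: val_inj.
    by rewrite rq_flipR.
- move=> z; have -> : dg (fun z i => match split i with inl j => D1 (lp z) j | inr k => D2 (rq z) k end) z
     = dg D1 (lp z) + dg D2 (rq z).
    rewrite /dg big_split_ord /=; congr (_ + _); apply: eq_bigr => i _.
    + by rewrite (unsplitK (inl _ i)).
    + by rewrite (unsplitK (inr _ i)).
  have E2 : dg D2 (rq z) = e by case: (H22 (rq z)).
  rewrite E2; case: (H12 (lp z)) => ->; auto.
Qed.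

Section Lift.
Variables m r : nat.
Lemma cardH : #|{: 'I_m * 'I_r}| = m * r.
Proof. by rewrite card_prod !card_ord. Qed.
Definition ee (i : 'I_(m * r)) : 'I_m * 'I_r := enum_val (cast_ord (esym cardH) i).
Lemma ee_bij : bijective ee.
Proof.
exists (fun p => cast_ord cardH (enum_rank p)) => [i|p]; rewrite /ee.
- by rewrite enum_valK cast_ordKV.
- by rewrite cast_ordK enum_rankK.
Qed.
Definition bt i := (ee i).1.
Definition pi (z : cube (m * r)) : cube m := [ffun j => odd (\sum_(i | bt i == j) (z i : nat))].

Lemma pi_flip z i0 : pi (flip z i0) = flip (pi z) (bt i0).
Proof.
apply/ffunP=> j; rewrite !ffunE.
case: eqP => [Ej|Nj].
- rewrite (bigD1 i0) /=; last by rewrite Ej.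
  rewrite [in RHS](bigD1 i0) /=; last by rewrite Ej.
  rewrite ffunE eqxx !oddD.
  have -> : \sum_(i | (bt i == j) && (i != i0)) ((flip z i0) i : nat) =
            \sum_(i | (bt i == j) && (i != i0)) (z i : nat).
    apply: eq_bigr => i /andP [_ Hi]; by rewrite ffunE (negbTE Hi).
  by case: (z i0); rewrite /= ?addTb ?addFb ?negbK.
- congr odd; apply: eq_bigr => i /eqP Hi; rewrite ffunE.
  case: eqP => // E; exfalso; apply: Nj; by rewrite -Hi E.
Qed.

Lemma sum_lift (F : 'I_m -> nat) : \sum_(i < m * r) F (bt i) = r * \sum_(j < m) F j.
Proof.
rewrite /bt; transitivity (\sum_(p : 'I_m * 'I_r) F p.1).
  by rewrite [RHS](reindex ee) //=; exact: onW_bij ee_bij.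
transitivity (\sum_(j < m) \sum_(k < r) F j); first by rewrite pair_big.
rewrite big_distrr /=.
by apply: eq_bigr => j _; rewrite sum_nat_const card_ord mulnC.
Qed.
End Lift.

Lemma Good_lift m r a b : Good m a b -> Good (m * r) (r * a) (r * b).
Proof.
move=> [D [H1 H2]]; exists (fun z i => D (pi z) (bt i)); split.
- by move=> z i; rewrite pi_flip H1.
- move=> z; rewrite /dg (@sum_lift m r (fun j => (D (pi z) j : nat))).
  by case: (H2 (pi z)) => <-; auto.
Qed.

Lemma Good_bip N : Good N 0 N.
Proof. by have := Good_lift N Good_1; rewrite mul1n muln0 muln1. Qed.

Lemma Good_euler e : Good (2 * e) e e.
Proof. by have := Good_lift e Good_2; rewrite muln1. Qed.

Lemma Good_weak n a b a' b' : Good n a b -> (a = a' \/ a = b') -> (b = a' \/ b = b') -> Good n a' b'.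
Proof.
move=> [D [H1 H2]] Ha Hb; exists D; split=> // z.
by case: (H2 z) => ->.
Qed.

Definition HYP := forall n k : nat, odd n -> 2 ^ k < n < 2 ^ k.+1 ->
     exists o : rel (cube n), is_orientation o /\
       forall v : cube n, indeg o v = n - 2 ^ k \/ indeg o v = n.

Lemma core (hyp : HYP) N G M : 0 < G -> G <= N -> N <= 2 * G -> G %| 2 ^ M * N -> Good N 0 G.
Proof.
move=> G0 GN N2G Hd.
case: (eqVneq N G) => [->|NG]; first exact: Good_bip.
case: (eqVneq N (2 * G)) => [->|N2G'].
  by apply: Good_weak (Good_euler G) _ _; auto.
have lt1 : G < N by rewrite ltn_neqAle eq_sym NG.
have lt2 : N < 2 * G by rewrite ltn_neqAle N2G' N2G.
set r := gcdn N G.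
have r0 : 0 < r by rewrite gcdn_gt0 G0 orbT.
set m := N %/ r; set x := G %/ r.
have Nm : N = m * r by rewrite divnK // dvdn_gcdl.
have Gx : G = x * r by rewrite divnK // dvdn_gcdr.
have cop : gcdn m x = 1.
  apply/eqP; rewrite -(eqn_pmul2r r0) mul1n muln_gcdl -Nm -Gx.
  by [].
have Hx : x %| 2 ^ M.
  have : x * r %| (2 ^ M * m) * r by rewrite -mulnA -Nm -Gx.
  rewrite dvdn_pmul2r // mulnC Gauss_dvdr //.
  by rewrite /coprime gcdnC cop.
have [k _ xk] := dvdn_pfactor x M (isT : prime 2) Hx.
have l1 : x < m by rewrite -(ltn_pmul2r r0) -Nm -Gx.
have l2 : m < 2 * x by rewrite -(ltn_pmul2r r0) -Nm -mulnA -Gx.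
have om : odd m.
  apply/negPn/negP => Hm.
  case: k xk => [|k] xk.
    by move: l1 l2; rewrite xk; case: m {Hm Nm cop} => [|[|]].
  have : 2 %| gcdn m x.
    by rewrite dvdn_gcd dvdn2 Hm xk expnS dvdn_mulr.
  by rewrite cop.
have := hyp m k om; rewrite -xk expnS -xk l1 l2 => /(_ isT) [o [Ho Hdeg]].
have := Good_rev (Good_complete Ho Hdeg).
rewrite subnn subKn ?(ltnW l1) // => /(Good_lift r).
by rewrite muln0 -Nm mulnC -Gx.
Qed.

Lemma main_le (hyp : HYP) n a b : 0 < n -> a <= b -> b <= n ->
  (exists s t : nat, s + t = 2 ^ n /\ a * s + b * t = n * 2 ^ (n - 1)) -> Good n a b.
Proof.
move=> n0 ab bn [s [t [Est Eq]]].
set P := 2 ^ (n - 1).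
have EP : 2 ^ n = 2 * P by rewrite /P subn1 -expnS prednK.
have P0 : 0 < P by rewrite expn_gt0.
rewrite EP in Est; move: Eq; rewrite -/P => Eq.
have h2a : 2 * a <= n.
  apply/leP; move/leP: ab => ab; move: Eq Est; rewrite -!plusE -!multE => Eq Est.
  move/leP: P0 => P0; nia.
have h2b : n <= 2 * b.
  apply/leP; move/leP: ab => ab; move: Eq Est; rewrite -!plusE -!multE => Eq Est.
  move/leP: P0 => P0; nia.
have Et : (b - a) * t = (n - 2 * a) * P.
  move/leP: ab => ab; move/leP: h2a => h; move: Eq Est; rewrite -!plusE -!multE -!minusE => Eq Est.
  nia.
have Es : (b - a) * s = (2 * b - n) * P.
  move/leP: ab => ab; move/leP: h2b => h; move: Eq Est; rewrite -!plusE -!multE -!minusE => Eq Est.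
  nia.
case: (eqVneq a b) => [eab|nab].
  have -> : n = 2 * a.
    apply/eqP; rewrite eqn_leq h2a; by rewrite eab h2b.
  rewrite -eab; exact: Good_euler.
have ltab : a < b by rewrite ltn_neqAle nab.
have G0 : 0 < b - a by rewrite subn_gt0.
case: (leqP (a + b) n) => hab.
- have c1 : b - a <= n - 2 * a.
    apply/leP; move/leP: hab; move/leP: h2a; rewrite -!plusE -!multE -!minusE; lia.
  have c2 : n - 2 * a <= 2 * (b - a).
    apply/leP; move/leP: h2b; move/leP: h2a; move/leP: ab; rewrite -!multE -!minusE; lia.
  have c3 : b - a %| 2 ^ (n - 1) * (n - 2 * a) by rewrite mulnC -/P -Et dvdn_mulr.
  have := Good_prod (core hyp G0 c1 c2 c3) (Good_euler a).
  have -> : n - 2 * a + 2 * a = n by rewrite subnK.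
  by rewrite add0n subnK ?(ltnW ltab).
- have c1 : b - a <= 2 * b - n.
    apply/leP; move/leP: hab; move/leP: h2b; move/leP: ab; rewrite -!plusE -!multE -!minusE; lia.
  have c2 : 2 * b - n <= 2 * (b - a).
    apply/leP; move/leP: h2b; move/leP: h2a; move/leP: ab; rewrite -!multE -!minusE; lia.
  have c3 : b - a %| 2 ^ (n - 1) * (2 * b - n) by rewrite mulnC -/P -Es dvdn_mulr.
  have := Good_prod (Good_rev (core hyp G0 c1 c2 c3)) (Good_euler (n - b)).
  have -> : 2 * b - n + 2 * (n - b) = n.
    apply/eqP; rewrite -(eqn_add2l 0); apply/eqP.
    move/leP: h2b; move/leP: bn; rewrite -!plusE -!multE -!minusE; lia.
  have -> : 2 * b - n - (b - a) + (n - b) = a.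
    move/leP: h2b; move/leP: bn; move/leP: hab; move/leP: ab; rewrite -!plusE -!multE -!minusE; lia.
  have -> : 2 * b - n - 0 + (n - b) = b.
    move/leP: h2b; move/leP: bn; rewrite -!plusE -!multE -!minusE; lia.
  by [].
Qed.

Theorem corollary3 :
  (forall n k : nat, odd n -> 2 ^ k < n < 2 ^ k.+1 ->
     exists o : rel (cube n), is_orientation o /\
       forall v : cube n, indeg o v = n - 2 ^ k \/ indeg o v = n) ->
  forall n a b : nat, 0 < n -> a <= n -> b <= n ->
    (exists s t : nat, s + t = 2 ^ n /\ a * s + b * t = n * 2 ^ (n - 1)) ->
    exists o : rel (cube n), is_orientation o /\
      forall v : cube n, indeg o v = a \/ indeg o v = b.
Proof.
move=> hyp n a b n0 an bn [s [t [E1 E2]]].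
apply: Good_sound.
case: (leqP a b) => ab.
- apply: main_le => //; by exists s, t.
- apply: Good_sym; apply: main_le => //; first exact: ltnW.
  by exists t, s; rewrite addnC E1 addnC.
Qed.
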